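(* Let $S$ be an $E$-unitary inverse semigroup, $A$ a semilattice of groups, $\Lambda=(\alpha,\lambda,f)$ a Sieben twisted $S$-module structure on $A$, $\Theta=\Theta^\Lambda=(\theta,w)$ the corresponding twisted partial action of $\mathcal G(S)$ on $A$, and $\Lambda'=\Lambda^\Theta=(\alpha',\lambda',f')$ the corresponding twisted $E(A)*_\theta\mathcal G(S)$-module structure on $A$. Then there exists an isomorphism $\nu:S\to E(A)*_\theta\mathcal G(S)$ such that $\alpha=\alpha'\circ\nu|_{E(S)}$, $\lambda=\lambda'\circ\nu$ and $f=f'\circ(\nu\times\nu)$.
   Context: A semilattice of groups is an inverse semigroup $A$ with central idempotents; $A_e=\{a: aa^{-1}=a^{-1}a=e\}$. $\sigma$ is the minimum group congruence, $\mathcal G(S)=S/\sigma$; $E$-unitary: $e\le s$, $e\in E(S)$ imply $s\in E(S)$. A twisted $S$-module structure $(\alpha,\lambda,f)$: $\alpha:E(S)\to E(A)$ isomorphism, $\lambda_s$ relatively invertible endomorphisms of $A$ (there exist $\bar\varphi\in\mathrm{End}\,A$, $e_\varphi\in E(A)$ with $\bar\varphi\varphi(a)=e_\varphi a$, $\varphi\bar\varphi(a)=\varphi(e_\varphi)a$, $e_\varphi$ identity of $\bar\varphi(A)$, $\varphi(e_\varphi)$ identity of $\varphi(A)$), $f(s,t)\in A_{\alpha(stt^{-1}s^{-1})}$, with (i) $\lambda_e(a)=\alpha(e)a$; (ii) $\lambda_s(\alpha(e))=\alpha(ses^{-1})$; (iii) $\lambda_s\lambda_t(a)=f(s,t)\lambda_{st}(a)f(s,t)^{-1}$;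 (iv) $f(se,e)=\alpha(ses^{-1})$, $f(e,es)=\alpha(ess^{-1})$; (v) $\lambda_s(f(t,u))f(s,tu)=f(s,t)f(st,u)$; Sieben: also $f(s,e)=\alpha(ses^{-1})$, $f(e,s)=\alpha(ess^{-1})$. $\Theta^\Lambda=(\theta,w)$ (a twisted partial action of $\mathcal G(S)$ on $A$, in the sense of a family of isomorphisms $\theta_x:D_{x^{-1}}\to D_x$ of ideals and invertible multipliers $w_{x,y}$ of $D_xD_{xy}$): $D_x=\bigsqcup_{s\in x}A_{\alpha(ss^{-1})}$; $\theta_x(a)=\lambda_s(a)$ for $a\in D_{x^{-1}}$, $s\in x$ unique with $\alpha(s^{-1}s)=aa^{-1}$; $w_{x,y}a=f(s,s^{-1}t)a$, $aw_{x,y}=af(s,s^{-1}t)$ for $a\in D_xD_{xy}$, $s\in x$, $t\in xy$ unique with $\alpha(ss^{-1})=\alpha(tt^{-1})=aa^{-1}$. The $\theta_x$ restrict to a partial action $\theta$ on $E(A)$, and $E(A)*_\theta\mathcal G(S)=\{e\delta_x: e\in E(D_x)\}$ with $e\delta_x\cdot e'\delta_y=\theta_x(\theta_x^{-1}(e)e')\delta_{xy}$. $\Lambda^\Theta=(\alpha',\lambda',f')$: $\alpha'(e\delta_1)=e$, $\lambda'_{e\delta_x}(a)=\theta_x(\theta_x^{-1}(e)a)$, $f'(e\delta_x,e'\delta_y)=\theta_x(\theta_x^{-1}(e)e')w_{x,y}$ (element of $D_xD_{xy}$ times multiplier). *)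

(* Defs.v *)
From Stdlib Require Import ClassicalEpsilon.
Set Implicit Arguments.
Unset Strict Implicit.

(* An inverse semigroup: a semigroup with a map s |-> s^-1 such that
   s s^-1 s = s, s^-1 s s^-1 = s^-1 and idempotents commute
   (equivalently: every element has a unique inverse, namely s^-1). *)
Record InvSemigroup := {
  carrier :> Type;
  smul : carrier -> carrier -> carrier;
  sinv : carrier -> carrier;
  smulA : forall a b c, smul a (smul b c) = smul (smul a b) c;
  smul_inv_l : forall a, smul (smul a (sinv a)) a = a;
  smul_inv_r : forall a, smul (smul (sinv a) a) (sinv a) = sinv a;
  idem_comm : forall e f, smul e e = e -> smul f f = f -> smul e f = smul f e
}.

Arguments smul {i} _ _.
Arguments sinv {i} _.

Section Defs.
Variable S : InvSemigroup.

Definition idem (e : S) : Prop := smul e e = e.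

Definition nat_le (s t : S) : Prop := s = smul (smul s (sinv s)) t.

Definition E_unitary : Prop :=
  forall e s : S, idem e -> nat_le e s -> idem s.

Definition sigma (s t : S) : Prop := exists e, idem e /\ smul e s = smul e t.

(* elements of G(S) = S/sigma are represented as sigma-classes (predicates on S) *)
Definition is_class (X : S -> Prop) : Prop :=
  exists s, forall t, X t <-> sigma s t.

Definition Gmul (X Y : S -> Prop) : S -> Prop :=
  fun u => exists s t, X s /\ Y t /\ sigma (smul s t) u.

Definition Ginv (X : S -> Prop) : S -> Prop :=
  fun u => exists s, X s /\ sigma (sinv s) u.
End Defs.

Definition semilattice_of_groups (A : InvSemigroup) : Prop :=
  forall e a : A, idem e -> smul e a = smul a e.

Definition inAe (A : InvSemigroup) (e a : A) : Prop :=
  smul a (sinv a) = e /\ smul (sinv a) a = e.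

Definition endo (A : InvSemigroup) (phi : A -> A) : Prop :=
  forall a b, phi (smul a b) = smul (phi a) (phi b).

Definition rel_invertible (A : InvSemigroup) (phi : A -> A) : Prop :=
  endo phi /\
  exists (phib : A -> A) (ephi : A),
    endo phib /\ idem ephi /\
    (forall a, phib (phi a) = smul ephi a) /\
    (forall a, phi (phib a) = smul (phi ephi) a) /\
    (exists a0, phib a0 = ephi) /\
    (forall a, smul ephi (phib a) = phib a /\ smul (phib a) ephi = phib a) /\
    (forall a, smul (phi ephi) (phi a) = phi a /\ smul (phi a) (phi ephi) = phi a).

Definition alpha_iso (S A : InvSemigroup) (alpha : S -> A) : Prop :=
  (forall e, idem e -> idem (alpha e)) /\
  (forall e f, idem e -> idem f -> alpha (smul e f) = smul (alpha e) (alpha f)) /\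
  (forall e f, idem e -> idem f -> alpha e = alpha f -> e = f) /\
  (forall g, idem g -> exists e, idem e /\ alpha e = g).

Definition twisted_module (S A : InvSemigroup)
    (alpha : S -> A) (lambda : S -> A -> A) (f : S -> S -> A) : Prop :=
  alpha_iso alpha /\
  (forall s, rel_invertible (lambda s)) /\
  (forall s t, inAe (alpha (smul (smul s t) (sinv (smul s t)))) (f s t)) /\
  (forall e a, idem e -> lambda e a = smul (alpha e) a) /\
  (forall s e, idem e -> lambda s (alpha e) = alpha (smul (smul s e) (sinv s))) /\
  (forall s t a, lambda s (lambda t a) =
                 smul (smul (f s t) (lambda (smul s t) a)) (sinv (f s t))) /\
  (forall s e, idem e -> f (smul s e) e = alpha (smul (smul s e) (sinv s))) /\
  (forall s e, idem e -> f e (smul e s) = alpha (smul (smul e s) (sinv s))) /\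
  (forall s t u, smul (lambda s (f t u)) (f s (smul t u)) =
                 smul (f s t) (f (smul s t) u)).

Definition sieben_twisted_module (S A : InvSemigroup)
    (alpha : S -> A) (lambda : S -> A -> A) (f : S -> S -> A) : Prop :=
  twisted_module alpha lambda f /\
  (forall s e, idem e -> f s e = alpha (smul (smul s e) (sinv s))) /\
  (forall s e, idem e -> f e s = alpha (smul (smul e s) (sinv s))).

Section Theta.
Variables (S A : InvSemigroup) (alpha : S -> A) (lambda : S -> A -> A)
          (f : S -> S -> A).

Definition inD (X : S -> Prop) (a : A) : Prop :=
  exists s, X s /\ inAe (alpha (smul s (sinv s))) a.

(* theta_x(a) = lambda_s(a), s in x the (unique) one with alpha(s^-1 s) = aa^-1 *)
Definition theta (X : S -> Prop) (a : A) : A :=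
  epsilon (inhabits a)
    (fun b => exists s, X s /\ alpha (smul (sinv s) s) = smul a (sinv a)
                        /\ b = lambda s a).

Definition theta_inv (X : S -> Prop) (a : A) : A :=
  epsilon (inhabits a)
    (fun b => inD (Ginv X) b /\ theta X b = a).

(* right action of the multiplier w_{x,y} on b in D_x D_{xy}:
   b w_{x,y} = b f(s, s^-1 t), s in x, t in xy,
   alpha(ss^-1) = alpha(tt^-1) = bb^-1 *)
Definition w_right (X Y : S -> Prop) (b : A) : A :=
  epsilon (inhabits b)
    (fun c => exists s t, X s /\ Gmul X Y t /\
       alpha (smul s (sinv s)) = smul b (sinv b) /\
       alpha (smul t (sinv t)) = smul b (sinv b) /\
       c = smul b (f s (smul (sinv s) t))).

(* The crossed product E(A) *_theta G(S) = { e delta_x : e in E(D_x) },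
   with e delta_x represented as the pair (e, x). *)
Definition CP (p : A * (S -> Prop)) : Prop :=
  is_class (snd p) /\ idem (fst p) /\ inD (snd p) (fst p).

Definition CPmul (p q : A * (S -> Prop)) : A * (S -> Prop) :=
  (theta (snd p) (smul (theta_inv (snd p) (fst p)) (fst q)),
   Gmul (snd p) (snd q)).

Definition alpha' (p : A * (S -> Prop)) : A := fst p.

Definition lambda' (p : A * (S -> Prop)) (a : A) : A :=
  theta (snd p) (smul (theta_inv (snd p) (fst p)) a).

Definition f' (p q : A * (S -> Prop)) : A :=
  w_right (snd p) (snd q)
    (theta (snd p) (smul (theta_inv (snd p) (fst p)) (fst q))).
End Theta.

(* Main.v *)
Require Import Defs.
From Stdlib Require Import ClassicalEpsilon FunctionalExtensionality PropExtensionality.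
Set Implicit Arguments.
Unset Strict Implicit.

Infix "⋅" := smul (at level 40, left associativity).
Ltac AC := repeat rewrite smulA; reflexivity.

Lemma idem_r (S : InvSemigroup) (a : S) : idem (a ⋅ sinv a).
Proof. unfold idem. rewrite smulA. rewrite smul_inv_l. reflexivity. Qed.

Lemma idem_l (S : InvSemigroup) (a : S) : idem (sinv a ⋅ a).
Proof. unfold idem. rewrite smulA. rewrite smul_inv_r. reflexivity. Qed.

Lemma inv_unique (S : InvSemigroup) (a b : S) :
  a ⋅ b ⋅ a = a -> b ⋅ a ⋅ b = b -> b = sinv a.
Proof.
  intros H1 H2.
  assert (Iba : idem (b ⋅ a)).
  { unfold idem. rewrite smulA, H2. reflexivity. }
  assert (Iab : idem (a ⋅ b)).
  { unfold idem. rewrite smulA, H1. reflexivity. }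
  assert (E1 : b = sinv a ⋅ a ⋅ b).
  { transitivity (b ⋅ (a ⋅ sinv a ⋅ a) ⋅ b). { rewrite smul_inv_l. auto. }
    transitivity ((b ⋅ a) ⋅ (sinv a ⋅ a) ⋅ b). { AC. }
    rewrite (idem_comm Iba (idem_l a)).
    transitivity (sinv a ⋅ a ⋅ (b ⋅ a ⋅ b)). { AC. }
    rewrite H2. reflexivity. }
  assert (E2 : b = b ⋅ (a ⋅ sinv a)).
  { transitivity (b ⋅ (a ⋅ sinv a ⋅ a) ⋅ b). { rewrite smul_inv_l. auto. }
    transitivity (b ⋅ ((a ⋅ sinv a) ⋅ (a ⋅ b))). { AC. }
    rewrite (idem_comm (idem_r a) Iab).
    transitivity (b ⋅ a ⋅ b ⋅ (a ⋅ sinv a)). { AC. }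
    rewrite H2. reflexivity. }
  transitivity (sinv a ⋅ a ⋅ b ⋅ (a ⋅ sinv a)).
  - rewrite <- E1. exact E2.
  - transitivity (sinv a ⋅ (a ⋅ b ⋅ a) ⋅ sinv a). { AC. }
    rewrite H1. apply smul_inv_r.
Qed.

Lemma inv_inv (S : InvSemigroup) (a : S) : sinv (sinv a) = a.
Proof. symmetry. apply inv_unique. apply smul_inv_r. apply smul_inv_l. Qed.

Lemma inv_idem (S : InvSemigroup) (e : S) : idem e -> sinv e = e.
Proof. intro H. symmetry. apply inv_unique; unfold idem in H; rewrite !H; auto. Qed.

Lemma idem_mul (S : InvSemigroup) (e f : S) : idem e -> idem f -> idem (e ⋅ f).
Proof.
  intros He Hf. unfold idem.
  transitivity (e ⋅ (f ⋅ e) ⋅ f). { AC. }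
  rewrite (idem_comm Hf He).
  transitivity ((e ⋅ e) ⋅ (f ⋅ f)). { AC. }
  rewrite He, Hf. reflexivity.
Qed.

Lemma inv_mul (S : InvSemigroup) (a b : S) : sinv (a ⋅ b) = sinv b ⋅ sinv a.
Proof.
  symmetry. apply inv_unique.
  - transitivity (a ⋅ ((b ⋅ sinv b) ⋅ (sinv a ⋅ a)) ⋅ b). { AC. }
    rewrite (idem_comm (idem_r b) (idem_l a)).
    transitivity ((a ⋅ sinv a ⋅ a) ⋅ (b ⋅ sinv b ⋅ b)). { AC. }
    rewrite !smul_inv_l. reflexivity.
  - transitivity (sinv b ⋅ ((sinv a ⋅ a) ⋅ (b ⋅ sinv b)) ⋅ sinv a). { AC. }
    rewrite (idem_comm (idem_l a) (idem_r b)).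
    transitivity ((sinv b ⋅ b ⋅ sinv b) ⋅ (sinv a ⋅ a ⋅ sinv a)). { AC. }
    rewrite !smul_inv_r. reflexivity.
Qed.

Lemma comm_mid (S : InvSemigroup) (x e f : S) : idem e -> idem f -> x ⋅ e ⋅ f = x ⋅ f ⋅ e.
Proof. intros He Hf. rewrite <- !smulA. rewrite (idem_comm He Hf). reflexivity. Qed.
Lemma sig_refl (S : InvSemigroup) (s : S) : sigma s s.
Proof. exists (s ⋅ sinv s). split. apply idem_r. reflexivity. Qed.

Lemma sig_sym (S : InvSemigroup) (s t : S) : sigma s t -> sigma t s.
Proof. intros [e [He H]]. exists e. auto. Qed.

Lemma sig_trans (S : InvSemigroup) (s t u : S) : sigma s t -> sigma t u -> sigma s u.
Proof.
  intros [e [He H]] [g [Hg H']]. exists (e ⋅ g). split. apply idem_mul; auto.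
  transitivity (g ⋅ (e ⋅ s)). { rewrite (idem_comm He Hg). AC. }
  rewrite H. transitivity (e ⋅ (g ⋅ t)). { rewrite smulA, smulA, (idem_comm He Hg). reflexivity. }
  rewrite H'. AC.
Qed.

Lemma sig_rmul (S : InvSemigroup) (s t u : S) : sigma s t -> sigma (s ⋅ u) (t ⋅ u).
Proof. intros [e [He H]]. exists e. split; auto. rewrite !smulA, H. reflexivity. Qed.

Lemma sig_lmul (S : InvSemigroup) (s t u : S) : sigma s t -> sigma (u ⋅ s) (u ⋅ t).
Proof.
  intros [e [He H]]. exists (u ⋅ e ⋅ sinv u). split.
  - replace (u ⋅ e ⋅ sinv u) with ((u ⋅ e) ⋅ sinv (u ⋅ e)).
    + apply idem_r.
    + rewrite inv_mul, (inv_idem He). transitivity (u ⋅ (e ⋅ e) ⋅ sinv u). AC. unfold idem in He; rewrite He; reflexivity.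
  - assert (K : forall x, u ⋅ e ⋅ sinv u ⋅ (u ⋅ x) = u ⋅ (e ⋅ x)).
    { intro x. transitivity (u ⋅ e ⋅ (sinv u ⋅ u) ⋅ x). AC.
      rewrite (comm_mid u He (idem_l u)). rewrite (smulA u (sinv u) u), smul_inv_l. AC. }
    rewrite !K, H. reflexivity.
Qed.

Lemma sig_inv (S : InvSemigroup) (s t : S) : sigma s t -> sigma (sinv s) (sinv t).
Proof.
  intros [e [He H]]. exists (sinv (e ⋅ s) ⋅ (e ⋅ s)). split. apply idem_l.
  assert (H' : sinv s ⋅ e = sinv t ⋅ e).
  { transitivity (sinv (e ⋅ s)). rewrite inv_mul, (inv_idem He); reflexivity.
    rewrite H, inv_mul, (inv_idem He); reflexivity. }
  transitivity (sinv s ⋅ e).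
  - rewrite inv_mul, (inv_idem He).
    transitivity (sinv s ⋅ (e ⋅ e) ⋅ (s ⋅ sinv s)). AC.
    unfold idem in He; rewrite He.
    rewrite (comm_mid (sinv s) He (idem_r s)).
    rewrite (smulA (sinv s) s (sinv s)), smul_inv_r. reflexivity.
  - rewrite H'. rewrite H. rewrite inv_mul, (inv_idem He).
    transitivity (sinv t ⋅ (e ⋅ e) ⋅ (t ⋅ sinv t)). 2: AC.
    unfold idem in He; rewrite He.
    rewrite (comm_mid (sinv t) He (idem_r t)).
    rewrite (smulA (sinv t) t (sinv t)), smul_inv_r. reflexivity.
Qed.

Lemma nat_le_idem (S : InvSemigroup) (f x : S) : idem f -> f = f ⋅ x -> nat_le f x.
Proof. intros Hf H. unfold nat_le. rewrite (inv_idem Hf), Hf. exact H. Qed.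

Lemma EU_idem (S : InvSemigroup) (s t : S) : E_unitary S -> sigma s t -> idem (sinv s ⋅ t).
Proof.
  intros EU [e [He H]].
  assert (Hf : idem (sinv s ⋅ e ⋅ s)).
  { replace (sinv s ⋅ e ⋅ s) with (sinv (e ⋅ s) ⋅ (e ⋅ s)). apply idem_l.
    rewrite inv_mul, (inv_idem He). transitivity (sinv s ⋅ (e ⋅ e) ⋅ s). AC. rewrite He. reflexivity. }
  apply (EU _ _ Hf). apply nat_le_idem; auto.
  transitivity (sinv s ⋅ e ⋅ (s ⋅ sinv s) ⋅ t). 2: AC.
  rewrite (comm_mid _ He (idem_r s)). rewrite (smulA (sinv s) s (sinv s)), smul_inv_r.
  rewrite <- (smulA (sinv s) e t), <- H. AC.
Qed.

Lemma uniqR (S : InvSemigroup) (s t : S) : E_unitary S -> sigma s t ->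
  sinv s ⋅ s = sinv t ⋅ t -> s = t.
Proof.
  intros EU Hst Hp.
  assert (Hv := EU_idem EU Hst).
  assert (Hw := EU_idem EU (sig_inv Hst)). rewrite inv_inv in Hw.
  assert (Ev : sinv t ⋅ s = sinv s ⋅ t).
  { rewrite <- (inv_idem Hv), inv_mul, inv_inv. reflexivity. }
  assert (Ew : t ⋅ sinv s = s ⋅ sinv t).
  { rewrite <- (inv_idem Hw), inv_mul, inv_inv. reflexivity. }
  assert (E1 : s = t ⋅ (sinv s ⋅ t)).
  { transitivity (s ⋅ (sinv s ⋅ s)). rewrite smulA, smul_inv_l; reflexivity.
    rewrite Hp. rewrite smulA, <- Ew. AC. }
  assert (E2 : t = s ⋅ (sinv s ⋅ t)).
  { transitivity (t ⋅ (sinv t ⋅ t)). rewrite smulA, smul_inv_l; reflexivity.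
    rewrite <- Hp. rewrite smulA, Ew. rewrite <- smulA, Ev. reflexivity. }
  rewrite E1 at 1. rewrite E2 at 1. rewrite <- smulA, Hv. symmetry. exact E2.
Qed.

Lemma uniqL (S : InvSemigroup) (s t : S) : E_unitary S -> sigma s t ->
  s ⋅ sinv s = t ⋅ sinv t -> s = t.
Proof.
  intros EU Hst Hp. rewrite <- (inv_inv s), <- (inv_inv t). f_equal.
  apply uniqR; auto. apply sig_inv; auto. rewrite !inv_inv. exact Hp.
Qed.
Ltac destr H := destruct H as [[[Aidem [Amul [Ainj Asurj]]] [Rinv [FA [Li [Lii [Liii [Liv1 [Liv2 Lv]]]]]]]] [Sf1 Sf2]].

Lemma idem_self (S : InvSemigroup) (x : S) : idem x -> x ⋅ sinv x = x.
Proof. intro H. rewrite (inv_idem H). exact H. Qed.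

Lemma inAe_idem (S : InvSemigroup) (x : S) : idem x -> inAe x x.
Proof. intro H. split; rewrite (inv_idem H); exact H. Qed.

Lemma idem_conj (S : InvSemigroup) (s e : S) : idem e -> idem (s ⋅ e ⋅ sinv s).
Proof.
  intro He. replace (s ⋅ e ⋅ sinv s) with ((s ⋅ e) ⋅ sinv (s ⋅ e)). apply idem_r.
  rewrite inv_mul, (inv_idem He). transitivity (s ⋅ (e ⋅ e) ⋅ sinv s). AC. rewrite He. reflexivity.
Qed.

Lemma ege (S : InvSemigroup) (e g : S) : idem e -> idem g -> e ⋅ g ⋅ e = g ⋅ e.
Proof.
  intros He Hg. rewrite <- smulA, (idem_comm Hg He), smulA, He. reflexivity.
Qed.

Lemma sig_se (S : InvSemigroup) (s e : S) : idem e -> sigma s (s ⋅ e).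
Proof.
  intro He. exists (s ⋅ e ⋅ sinv s). split. apply idem_conj; auto.
  assert (K : s ⋅ e ⋅ sinv s ⋅ s = s ⋅ e).
  { transitivity (s ⋅ e ⋅ (sinv s ⋅ s)). AC. rewrite (comm_mid _ He (idem_l s)).
    rewrite (smulA s (sinv s) s), smul_inv_l. reflexivity. }
  rewrite K. rewrite smulA, K, <- smulA, He. reflexivity.
Qed.

Lemma conj_idem (A : InvSemigroup) (g F b : A) : inAe g F -> inAe g b ->
  idem (F ⋅ b ⋅ sinv F) -> idem b.
Proof.
  intros [F1 F2] [b1 b2] Hk. set (k := F ⋅ b ⋅ sinv F) in *.
  assert (Eb : sinv F ⋅ k ⋅ F = b).
  { unfold k. transitivity ((sinv F ⋅ F) ⋅ b ⋅ (sinv F ⋅ F)). AC.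
    rewrite F2. rewrite <- b1 at 1. rewrite <- b2.
    rewrite smul_inv_l, smulA, smul_inv_l. reflexivity. }
  assert (Ek : k ⋅ (F ⋅ sinv F) = k).
  { unfold k. transitivity (F ⋅ b ⋅ (sinv F ⋅ F ⋅ sinv F)). AC. rewrite smul_inv_r. reflexivity. }
  unfold idem. rewrite <- Eb.
  transitivity (sinv F ⋅ (k ⋅ (F ⋅ sinv F)) ⋅ k ⋅ F). AC.
  rewrite Ek. transitivity (sinv F ⋅ (k ⋅ k) ⋅ F). AC. rewrite Hk. reflexivity.
Qed.


Lemma L1 (S A : InvSemigroup) (alpha : S -> A) (lambda : S -> A -> A) (f : S -> S -> A) :
  sieben_twisted_module alpha lambda f ->
  forall s a, lambda s a = alpha (s ⋅ sinv s) ⋅ lambda s a.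
Proof.
  intros H s a. destr H.
  destruct (Rinv s) as [Hend [phib [ephi [_ [Hep [_ [_ [_ [_ Hid]]]]]]]]].
  destruct (Asurj ephi Hep) as [e' [He' <-]].
  destruct (Hid a) as [H1 _]. rewrite (Lii s e' He') in H1.
  rewrite <- H1 at 2. rewrite smulA, <- Amul; [| apply idem_r | apply idem_conj; auto].
  replace (s ⋅ sinv s ⋅ (s ⋅ e' ⋅ sinv s)) with (s ⋅ e' ⋅ sinv s). symmetry; exact H1.
  transitivity (s ⋅ sinv s ⋅ s ⋅ e' ⋅ sinv s). rewrite smul_inv_l. reflexivity. AC.
Qed.

Lemma L2 (S A : InvSemigroup) (alpha : S -> A) (lambda : S -> A -> A) (f : S -> S -> A) :
  semilattice_of_groups A -> sieben_twisted_module alpha lambda f ->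
  forall s e y, idem e -> lambda (s ⋅ e) y = lambda s (alpha e ⋅ y).
Proof.
  intros SG H s e y He. pose proof (L1 H (s ⋅ e) y) as HL. destr H.
  rewrite <- (Li e y He). rewrite Liii. rewrite (Sf1 s e He).
  assert (Hh : idem (alpha (s ⋅ e ⋅ sinv s))) by (apply Aidem, idem_conj; auto).
  rewrite (inv_idem Hh).
  replace (s ⋅ e ⋅ sinv (s ⋅ e)) with (s ⋅ e ⋅ sinv s) in HL.
  2: { rewrite inv_mul, (inv_idem He). transitivity (s ⋅ (e ⋅ e) ⋅ sinv s). rewrite He; reflexivity. AC. }
  set (L := lambda (s ⋅ e) y) in *. set (h := alpha (s ⋅ e ⋅ sinv s)) in *.
  rewrite (SG h L Hh). rewrite <- smulA, Hh. rewrite <- (SG h L Hh). exact HL.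
Qed.

Lemma theta_spec (S A : InvSemigroup) (alpha : S -> A) (lambda : S -> A -> A) (f : S -> S -> A) :
  E_unitary S -> sieben_twisted_module alpha lambda f ->
  forall s r0 a, sigma s r0 -> alpha (sinv r0 ⋅ r0) = a ⋅ sinv a ->
  theta alpha lambda (sigma s) a = lambda r0 a.
Proof.
  intros EU H s r0 a Hs Ha. destr H. unfold theta.
  match goal with |- epsilon ?i ?P = _ => 
    destruct (epsilon_spec i P) as [r [Hr [Hra Heq]]]; [exists (lambda r0 a); exists r0; auto|] end.
  rewrite Heq. f_equal. apply uniqR; auto.
  - apply sig_trans with s. apply sig_sym; auto. auto.
  - apply Ainj; try apply idem_l. congruence.
Qed.

Lemma Gmul_eq (S : InvSemigroup) (s t : S) : Gmul (sigma s) (sigma t) = sigma (s ⋅ t).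
Proof.
  apply functional_extensionality. intro u. apply propositional_extensionality. split.
  - intros [s' [t' [H1 [H2 H3]]]]. apply sig_trans with (s' ⋅ t'); auto.
    apply sig_trans with (s' ⋅ t). apply sig_rmul; auto. apply sig_lmul; auto.
  - intro Hu. exists s, t. split. apply sig_refl. split. apply sig_refl. exact Hu.
Qed.

Lemma lam_alpha (S A : InvSemigroup) (alpha : S -> A) (lambda : S -> A -> A) (f : S -> S -> A) :
  sieben_twisted_module alpha lambda f ->
  forall s, lambda s (alpha (sinv s ⋅ s)) = alpha (s ⋅ sinv s).
Proof.
  intros H s. destr H. rewrite Lii by apply idem_l. f_equal.
  rewrite (smulA s (sinv s) s), smul_inv_l. reflexivity.
Qed.

Lemma thinv (S A : InvSemigroup) (alpha : S -> A) (lambda : S -> A -> A) (f : S -> S -> A) :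
  E_unitary S -> sieben_twisted_module alpha lambda f ->
  forall s, theta_inv alpha lambda (sigma s) (alpha (s ⋅ sinv s)) = alpha (sinv s ⋅ s).
Proof.
  intros EU H s. pose proof (theta_spec EU H) as TS. pose proof (lam_alpha H) as LA.
  pose proof (L1 H) as HL1. destr H. unfold theta_inv.
  match goal with |- epsilon ?i ?P = _ =>
    pose proof (epsilon_spec i P) as HP; set (b := epsilon i P) in * end.
  destruct HP as [[s' [[r [Hsr Hrs']] [Hb1 Hb2]]] Htb].
  { exists (alpha (sinv s ⋅ s)). split.
    - exists (sinv s). split. exists s. split; apply sig_refl.
      rewrite inv_inv. apply inAe_idem. apply Aidem, idem_l.
    - rewrite (TS s s). apply LA. apply sig_refl.
      rewrite idem_self; auto. apply Aidem, idem_l. }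
  assert (Hss' : sigma s (sinv s')).
  { apply sig_trans with r; auto. rewrite <- (inv_inv r). apply sig_inv. auto. }
  rewrite (TS s (sinv s') b Hss') in Htb by (rewrite inv_inv; congruence).
  assert (Eg : alpha (s' ⋅ sinv s') = alpha (sinv (sinv s') ⋅ sinv s')) by (rewrite inv_inv; reflexivity).
  rewrite Eg in Hb1, Hb2.
  set (q := sinv s') in *.
  assert (Hgi : idem (sinv q ⋅ q)) by apply idem_l.
  pose proof (Liii (sinv q) q b) as E3. rewrite Htb in E3.
  rewrite (Li _ _ Hgi) in E3.
  assert (Hgb : alpha (sinv q ⋅ q) ⋅ b = b) by (rewrite <- Hb1; apply smul_inv_l).
  rewrite Hgb in E3.
  assert (HF := FA (sinv q) q).
  replace (sinv q ⋅ q ⋅ sinv (sinv q ⋅ q)) with (sinv q ⋅ q) in HF by (symmetry; apply idem_self, idem_l).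
  assert (Hbi : idem b).
  { apply (conj_idem HF (conj Hb1 Hb2)). rewrite <- E3.
    rewrite Lii by apply idem_r. apply Aidem, idem_conj, idem_r. }
  assert (Eb : b = alpha (sinv q ⋅ q)) by (rewrite <- Hb1; symmetry; apply idem_self; auto).
  rewrite Eb in Htb. rewrite LA in Htb.
  apply Ainj in Htb; try apply idem_r.
  assert (Eq : s = q) by (apply uniqL; auto).
  rewrite Eb, Eq. reflexivity.
Qed.

Lemma inner (S A : InvSemigroup) (alpha : S -> A) (lambda : S -> A -> A) (f : S -> S -> A) :
  E_unitary S -> sieben_twisted_module alpha lambda f ->
  forall s t, theta alpha lambda (sigma s) (alpha (sinv s ⋅ s) ⋅ alpha (t ⋅ sinv t))
              = alpha (s ⋅ t ⋅ sinv (s ⋅ t)).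
Proof.
  intros EU H s t. pose proof (theta_spec EU H) as TS. destr H.
  set (e := t ⋅ sinv t). set (g := sinv s ⋅ s).
  assert (He : idem e) by apply idem_r. assert (Hg : idem g) by apply idem_l.
  rewrite <- Amul by auto.
  rewrite (TS s (s ⋅ e)).
  - rewrite Lii by (apply idem_mul; auto). f_equal.
    rewrite inv_mul, (inv_idem He).
    transitivity (s ⋅ (e ⋅ g ⋅ e) ⋅ e ⋅ sinv s). AC. rewrite (ege He Hg).
    transitivity (s ⋅ g ⋅ (e ⋅ e) ⋅ sinv s). AC. rewrite He. unfold g.
    rewrite (smulA s (sinv s) s), smul_inv_l. unfold e. rewrite (inv_mul s t). AC.
  - apply sig_se; auto.
  - rewrite idem_self by (apply Aidem, idem_mul; auto). f_equal.
    rewrite inv_mul, (inv_idem He).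
    transitivity (e ⋅ g ⋅ e). unfold g; AC. rewrite (ege He Hg). reflexivity.
Qed.

Lemma lam_main (S A : InvSemigroup) (alpha : S -> A) (lambda : S -> A -> A) (f : S -> S -> A) :
  E_unitary S -> semilattice_of_groups A -> sieben_twisted_module alpha lambda f ->
  forall s a, lambda s a =
    theta alpha lambda (sigma s) (theta_inv alpha lambda (sigma s) (alpha (s ⋅ sinv s)) ⋅ a).
Proof.
  intros EU SG H s a. rewrite (thinv EU H). pose proof (theta_spec EU H) as TS.
  pose proof (L1 H) as HL1. pose proof (L2 SG H) as HL2. destr H.
  set (g := sinv s ⋅ s). assert (Hg : idem g) by apply idem_l.
  destruct (Asurj (a ⋅ sinv a) (idem_r a)) as [e [He Ea]].
  rewrite (TS s (s ⋅ e)).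
  - rewrite HL2 by auto. rewrite smulA, <- Amul by auto.
    rewrite (idem_comm He Hg), Amul by auto. rewrite <- smulA.
    pose proof (Rinv s) as [Hend _]. rewrite Hend.
    rewrite Ea, smul_inv_l. unfold g. rewrite (lam_alpha (conj (conj (conj Aidem (conj Amul (conj Ainj Asurj))) (conj Rinv (conj FA (conj Li (conj Lii (conj Liii (conj Liv1 (conj Liv2 Lv)))))))) (conj Sf1 Sf2))).
    apply HL1.
  - apply sig_se; auto.
  - rewrite inv_mul, inv_mul, (inv_idem (Aidem _ Hg)).
    transitivity (alpha g ⋅ (a ⋅ sinv a) ⋅ alpha g). 2: AC.
    rewrite <- Ea. rewrite <- !Amul by (solve [auto | apply idem_mul; auto]). f_equal.
    rewrite (inv_idem He).
    transitivity (e ⋅ g ⋅ e). unfold g; AC. rewrite (ege He Hg), (ege Hg He).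
    apply (idem_comm Hg He).
Qed.

Lemma f_main (S A : InvSemigroup) (alpha : S -> A) (lambda : S -> A -> A) (f : S -> S -> A) :
  E_unitary S -> sieben_twisted_module alpha lambda f ->
  forall s t, f s t = w_right alpha f (sigma s) (sigma t) (alpha (s ⋅ t ⋅ sinv (s ⋅ t))).
Proof.
  intros EU H s t. destr H.
  set (e := t ⋅ sinv t). set (g := sinv s ⋅ s).
  assert (He : idem e) by apply idem_r. assert (Hg : idem g) by apply idem_l.
  set (P := s ⋅ e ⋅ sinv s).
  assert (HP : idem P) by (apply idem_conj; auto).
  assert (EP : s ⋅ t ⋅ sinv (s ⋅ t) = P) by (unfold P, e; rewrite inv_mul; AC).
  assert (EP2 : s ⋅ e ⋅ sinv (s ⋅ e) = P).
  { unfold P. rewrite inv_mul, (inv_idem He). transitivity (s ⋅ (e ⋅ e) ⋅ sinv s). AC. rewrite He. reflexivity. }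
  rewrite EP. unfold w_right.
  match goal with |- _ = epsilon ?i ?Q =>
    pose proof (epsilon_spec i Q) as HQ; set (c := epsilon i Q) in * end.
  destruct HQ as [s1 [t1 [H1 [H2 [H3 [H4 ->]]]]]].
  { exists (alpha P ⋅ f (s ⋅ e) (sinv (s ⋅ e) ⋅ (s ⋅ t))), (s ⋅ e), (s ⋅ t).
    split. apply sig_se; auto. split. rewrite Gmul_eq. apply sig_refl.
    rewrite (idem_self (Aidem _ HP)). rewrite EP, EP2. auto. }
  rewrite Gmul_eq in H2. rewrite (idem_self (Aidem _ HP)) in H3, H4.
  apply Ainj in H3; try apply idem_r; auto. apply Ainj in H4; try apply idem_r; auto.
  assert (Et1 : s ⋅ t = t1) by (apply uniqL; auto; congruence). subst t1.
  assert (Es1 : s ⋅ e = s1).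
  { apply uniqL; auto. apply sig_trans with s; auto. apply sig_sym, sig_se; auto. congruence. }
  subst s1.
  assert (Egt : sinv (s ⋅ e) ⋅ (s ⋅ t) = g ⋅ t).
  { rewrite inv_mul, (inv_idem He). transitivity (e ⋅ g ⋅ t). unfold g; AC.
    rewrite (idem_comm He Hg). transitivity (g ⋅ (e ⋅ t)). AC. unfold e. rewrite smul_inv_l. reflexivity. }
  rewrite Egt.
  pose proof (Lv s e (g ⋅ t)) as C1.
  assert (E1 : e ⋅ (g ⋅ t) = g ⋅ t).
  { rewrite smulA, (idem_comm He Hg), <- smulA. unfold e. rewrite smul_inv_l. reflexivity. }
  rewrite E1, (Sf2 _ _ He), (Sf1 _ _ He) in C1.
  assert (E2 : e ⋅ (g ⋅ t) ⋅ sinv (g ⋅ t) = g ⋅ e).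
  { rewrite E1, inv_mul, (inv_idem Hg). transitivity (g ⋅ e ⋅ g). unfold e; AC.
    rewrite (ege Hg He). apply (idem_comm He Hg). }
  rewrite E2, Lii in C1 by (apply idem_mul; auto).
  assert (E3 : s ⋅ (g ⋅ e) ⋅ sinv s = P).
  { unfold P, g. transitivity (s ⋅ sinv s ⋅ s ⋅ e ⋅ sinv s). AC. rewrite smul_inv_l. reflexivity. }
  rewrite E3 in C1. fold P in C1.
  pose proof (Lv s g t) as C2.
  assert (Esg : s ⋅ g = s) by (unfold g; rewrite smulA; apply smul_inv_l).
  rewrite Esg, (Sf2 _ _ Hg), (Sf1 _ _ Hg) in C2.
  replace (g ⋅ t ⋅ sinv t) with (g ⋅ e) in C2 by (unfold e; AC).
  rewrite Lii in C2 by (apply idem_mul; auto). rewrite E3 in C2.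
  assert (E4 : s ⋅ g ⋅ sinv s = s ⋅ sinv s) by (rewrite Esg; reflexivity).
  rewrite E4 in C2.
  rewrite <- C1, C2.
  destruct (FA s t) as [F1 _]. rewrite EP in F1.
  transitivity (alpha (s ⋅ sinv s) ⋅ (f s t ⋅ sinv (f s t) ⋅ f s t)).
  2: rewrite smul_inv_l; reflexivity.
  rewrite F1, smulA, <- Amul by (first [apply idem_r | exact HP]).
  replace (s ⋅ sinv s ⋅ P) with P.
  2: { unfold P. transitivity (s ⋅ sinv s ⋅ s ⋅ e ⋅ sinv s). rewrite smul_inv_l; reflexivity. AC. }
  rewrite <- F1. symmetry. apply smul_inv_l.
Qed.

Theorem proposition9p1 (S A : InvSemigroup)
    (alpha : S -> A) (lambda : S -> A -> A) (f : S -> S -> A) :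
  E_unitary S ->
  semilattice_of_groups A ->
  sieben_twisted_module alpha lambda f ->
  exists nu : S -> A * (S -> Prop),
    (* nu is an isomorphism S -> E(A) *_theta G(S) *)
    (forall s, CP alpha (nu s)) /\
    (forall s t, nu s = nu t -> s = t) /\
    (forall p, CP alpha p -> exists s, nu s = p) /\
    (forall s t, nu (smul s t) = CPmul alpha lambda (nu s) (nu t)) /\
    (* alpha = alpha' o nu|E(S), lambda = lambda' o nu, f = f' o (nu x nu) *)
    (forall e, idem e -> alpha e = alpha' (nu e)) /\
    (forall s a, lambda s a = lambda' alpha lambda (nu s) a) /\
    (forall s t, f s t = f' alpha lambda f (nu s) (nu t)).
Proof.
  intros EU SG H.
  pose proof (thinv EU H) as TI. pose proof (inner EU H) as IN.
  pose proof (lam_main EU SG H) as LM. pose proof (f_main EU H) as FM.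
  destr H.
  exists (fun s => (alpha (s ⋅ sinv s), sigma s)).
  split; [| split; [| split; [| split; [| split; [| split]]]]].
  - intro s. unfold CP; simpl. split; [| split].
    + exists s. intro u. tauto.
    + apply Aidem, idem_r.
    + exists s. split. apply sig_refl. apply inAe_idem, Aidem, idem_r.
  - intros s t Heq. injection Heq as Ha Hs.
    apply uniqL; auto.
    + rewrite Hs. apply sig_refl.
    + apply Ainj; auto; apply idem_r.
  - intros [a X] [[s0 Hs0] [Ha [s [HXs [Hb1 _]]]]]. simpl in *.
    exists s. f_equal.
    + rewrite (idem_self Ha) in Hb1. symmetry; exact Hb1.
    + apply functional_extensionality. intro u. apply propositional_extensionality.
      assert (H0 : sigma s0 s) by (apply Hs0; exact HXs).
      rewrite Hs0. split.
      * intro; apply sig_trans with s; auto.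
      * intro; apply sig_trans with s0; auto. apply sig_sym; auto.
  - intros s t. unfold CPmul; simpl. rewrite TI, IN, Gmul_eq. reflexivity.
  - intros e He. unfold alpha'; simpl. rewrite (idem_self He). reflexivity.
  - intros s a. unfold lambda'; simpl. apply LM.
  - intros s t. unfold f'; simpl. rewrite TI, IN. apply FM.
Qed.
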